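(* There exist a control system $\dot x=f(x,u)$ (with $f$ continuous near the origin and $f(0,0)=0$) and nonnegative functions $d_1,d_2$ defined near the origin for which there is no continuous function $H\colon[0,\varepsilon)\to[0,\infty)$ with $H(0)=0$ (depending only on $f$, $d_1$, $d_2$) such that every stabilizing feedback $u$ satisfying $$d_1(x)\le\|u(x)\|\le d_2(x)\quad\text{for all sufficiently small }\|x\|$$ also satisfies $$h(r):=\sup_{y\in\mathbb{B}_r(0)}\|F_u^{-1}(y)\|\le H(r)\quad\text{for all sufficiently small } r,$$ where $F_u(x):=f(x,u(x))$.
   Context: $\mathbb{B}_r(0)$ denotes the open ball of radius $r$ centered at $0$. A stabilizing feedback for $\dot x=f(x,u)$ is a map $u$ defined on a neighborhood of the origin with $u(0)=0$ such that the origin is a locally asymptotically stable equilibrium (Lyapunov stable and locally attractive) of $\dot x=f(x,u(x))$, with $x\mapsto f(x,u(x))$ continuous and $\dot x=f(x,u(x))$ having a unique solution for all $t$ from every initial condition near the origin. For such $u$, $F_u$ restricted to a suitable neighborhood of the origin is a homeomorphism onto a neighborhood of the origin, and $F_u^{-1}$ denotes this local inverse. *)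

(* Defs.v *)
From HB Require Import structures.
From mathcomp Require Import all_boot all_order all_algebra.
From mathcomp Require Import all_classical all_reals all_analysis.
Set Implicit Arguments. Unset Strict Implicit. Unset Printing Implicit Defensive.
Import Order.TTheory GRing.Theory Num.Theory.
Import numFieldNormedType.Exports.
Local Open Scope classical_set_scope.
Local Open Scope ring_scope.

Section Defs.
Variable R : realType.

Definition enorm (n : nat) (v : 'rV[R]_n) : R :=
  Num.sqrt (\sum_(i < n) (v ord0 i) ^+ 2).

Definition eball0 {n : nat} (r : R) : set 'rV[R]_n :=
  [set y | enorm y < r].

Definition Fu (n m : nat) (f : 'rV[R]_n -> 'rV[R]_m -> 'rV[R]_n)
  (u : 'rV[R]_n -> 'rV[R]_m) : 'rV[R]_n -> 'rV[R]_n :=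
  fun x => f x (u x).

Definition continuous_near_origin (n m : nat)
  (f : 'rV[R]_n -> 'rV[R]_m -> 'rV[R]_n) : Prop :=
  exists rho : R, 0 < rho /\
    forall x v, enorm x < rho -> enorm v < rho ->
      (fun p : 'rV[R]_n * 'rV[R]_m => f p.1 p.2) @ (x, v) --> f x v.

Definition nonneg_near_origin (n : nat) (d : 'rV[R]_n -> R) : Prop :=
  exists rho : R, 0 < rho /\ forall x, enorm x < rho -> 0 <= d x.

Definition is_solution (n : nat) (D : set 'rV[R]_n) (F : 'rV[R]_n -> 'rV[R]_n)
  (x0 : 'rV[R]_n) (phi : R -> 'rV[R]_n) : Prop :=
  [/\ phi 0 = x0,
      (forall t : R, 0 <= t -> D (phi t)),
      phi @ at_right 0 --> x0 &
      (forall t : R, 0 < t -> is_derive t 1 phi (F (phi t)))].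

Definition stabilizing (n m : nat) (f : 'rV[R]_n -> 'rV[R]_m -> 'rV[R]_n)
  (u : 'rV[R]_n -> 'rV[R]_m) : Prop :=
  exists rho : R, 0 < rho /\
  let D := @eball0 n rho in
  let F := Fu f u in
  [/\ u 0 = 0,
      (forall x, D x -> F @ x --> F x),
      (exists delta : R, 0 < delta /\ forall x0, enorm x0 < delta ->
         (exists phi, is_solution D F x0 phi) /\
         (forall phi1 phi2, is_solution D F x0 phi1 -> is_solution D F x0 phi2 ->
            forall t : R, 0 <= t -> phi1 t = phi2 t)),
      (forall eps : R, 0 < eps -> exists delta : R, 0 < delta /\
         forall x0 phi, enorm x0 < delta -> is_solution D F x0 phi ->
           forall t : R, 0 <= t -> enorm (phi t) < eps) &
      (exists delta : R, 0 < delta /\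
         forall x0 phi, enorm x0 < delta -> is_solution D F x0 phi ->
           phi t @[t --> +oo%R] --> (0 : 'rV[R]_n))].

Definition bounded_near_origin (n m : nat) (d1 d2 : 'rV[R]_n -> R)
  (u : 'rV[R]_n -> 'rV[R]_m) : Prop :=
  exists rho : R, 0 < rho /\
    forall x, enorm x < rho -> d1 x <= enorm (u x) <= d2 x.

Definition local_inverse (n : nat) (F g : 'rV[R]_n -> 'rV[R]_n) : Prop :=
  exists U V : set 'rV[R]_n,
    open U /\ open V /\ U 0 /\ V 0 /\
    (forall x, U x -> V (F x) /\ g (F x) = x) /\
    (forall y, V y -> U (g y) /\ F (g y) = y) /\
    {within U, continuous F} /\
    {within V, continuous g}.

Definition hsup (n : nat) (g : 'rV[R]_n -> 'rV[R]_n) (r : R) : \bar R :=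
  ereal_sup [set (enorm (g y))%:E | y in @eball0 n r].

End Defs.

(* Main.v *)
Require Import Defs.
From HB Require Import structures.
From mathcomp Require Import all_boot all_order all_algebra.
From mathcomp Require Import all_classical all_reals all_analysis.
Import Order.TTheory GRing.Theory Num.Theory.
Import numFieldNormedType.Exports.
Local Open Scope classical_set_scope.
Local Open Scope ring_scope.

From mathcomp Require Import lra ring.
Set Implicit Arguments. Unset Strict Implicit. Unset Printing Implicit Defensive.


Section S.
Variable R : realType.

Definition i0 : 'I_2 := ord0.
Definition i1 : 'I_2 := @Ordinal 2 1 isT.

Definition mk2 (a b : R) : 'rV[R]_2 := \row_(j < 2) (if j == i0 then a else b).

Lemma mk2_0 a b : mk2 a b ord0 i0 = a.
Proof. by rewrite mxE. Qed.
Lemma mk2_1 a b : mk2 a b ord0 i1 = b.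
Proof. by rewrite mxE. Qed.

Lemma mk2_eta (x : 'rV[R]_2) : x = mk2 (x ord0 i0) (x ord0 i1).
Proof.
apply/matrixP => i j; rewrite mxE (ord1 i).
case: j => [[|[|k]] Hk] //=.
- by congr (x _ _); apply: val_inj.
- by congr (x _ _); apply: val_inj.
Qed.

Lemma enorm2 (x : 'rV[R]_2) : enorm x = Num.sqrt (x ord0 i0 ^+ 2 + x ord0 i1 ^+ 2).
Proof.
rewrite /enorm 2!big_ord_recl big_ord0 addr0.
by have -> : (lift ord0 (ord0 : 'I_1)) = i1 by apply: val_inj.
Qed.

End S.
Section S2.
Variable R : realType.

Lemma enorm_ge0 n (x : 'rV[R]_n) : 0 <= enorm x.
Proof. exact: sqrtr_ge0. Qed.

Lemma sqrt_le_sum (a b : R) : Num.sqrt (a ^+ 2 + b ^+ 2) <= `|a| + `|b|.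
Proof.
have h : `|a| + `|b| = Num.sqrt ((`|a| + `|b|) ^+ 2).
  by rewrite sqrtr_sqr (ger0_norm (addr_ge0 (normr_ge0 a) (normr_ge0 b))).
rewrite [X in _ <= X]h ler_sqrt ?sqr_ge0 //.
rewrite -[a ^+ 2]real_normK ?num_real // -[b ^+ 2]real_normK ?num_real //.
have := normr_ge0 a; have := normr_ge0 b; nra.
Qed.

Lemma sqrt_ge_l (a b : R) : `|a| <= Num.sqrt (a ^+ 2 + b ^+ 2).
Proof.
rewrite -sqrtr_sqr ler_sqrt; last by rewrite addr_ge0 // sqr_ge0.
by rewrite lerDl sqr_ge0.
Qed.

Lemma sqrt_ge_r (a b : R) : `|b| <= Num.sqrt (a ^+ 2 + b ^+ 2).
Proof. by rewrite addrC sqrt_ge_l. Qed.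

Lemma enorm_le_sum (x : 'rV[R]_2) : enorm x <= `|x ord0 i0| + `|x ord0 i1|.
Proof. by rewrite enorm2 sqrt_le_sum. Qed.
Lemma enorm_ge_0 (x : 'rV[R]_2) : `|x ord0 i0| <= enorm x.
Proof. by rewrite enorm2 sqrt_ge_l. Qed.
Lemma enorm_ge_1 (x : 'rV[R]_2) : `|x ord0 i1| <= enorm x.
Proof. by rewrite enorm2 sqrt_ge_r. Qed.
Lemma enorm_mk2_0 (s : R) : enorm (mk2 0 s) = `|s|.
Proof. by rewrite enorm2 mk2_0 mk2_1 expr0n add0r sqrtr_sqr. Qed.
End S2.

Section S3.
Variable R : realType.

Lemma entry_le_norm (x : 'rV[R]_2) j : `|x ord0 j| <= `|x|.
Proof.
rewrite [leRHS]/Num.Def.normr /= mx_normrE; apply/bigmax_geP; right => /=.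
by exists (ord0, j).
Qed.

Lemma norm_le (x : 'rV[R]_2) e : 0 <= e ->
  `|x ord0 i0| <= e -> `|x ord0 i1| <= e -> `|x| <= e.
Proof.
move=> e0 h0 h1; rewrite /Num.Def.normr /= mx_normrE; apply: bigmax_le => // -[i j] _ /=.
rewrite (ord1 i); case: j => [[|[|k]] Hk] //=.
- by move: h0; congr (`|x _ _| <= _); apply: val_inj.
- by move: h1; congr (`|x _ _| <= _); apply: val_inj.
Qed.

Lemma proj_cvg {T} {F : set_system T} {FF : Filter F} (f : T -> 'rV[R]_2) (l : 'rV[R]_2) j :
  f @ F --> l -> (fun x => f x ord0 j) @ F --> l ord0 j.
Proof.
move=> /cvgrPdist_le h; apply/cvgrPdist_le => e e0.
have := h e e0; apply: filterS => x hx.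
apply: le_trans hx.
have -> : l ord0 j - f x ord0 j = (l - f x) ord0 j by rewrite !mxE.
exact: entry_le_norm.
Qed.

Lemma mk2_cvg {T} {F : set_system T} {FF : Filter F} (fa fb : T -> R) a b :
  fa @ F --> a -> fb @ F --> b -> (fun x => mk2 (fa x) (fb x)) @ F --> mk2 a b.
Proof.
move=> /cvgrPdist_le ha /cvgrPdist_le hb; apply/cvgrPdist_le => e e0.
have := ha e e0; have := hb e e0; apply: filterS2 => x hbx hax.
by apply: norm_le; rewrite ?(ltW e0) // !mxE.
Qed.
End S3.

Section S4.
Variable R : realType.

Lemma proj_derive (phi : R -> 'rV[R]_2) (t : R) (v : 'rV[R]_2) (j : 'I_2) :
  is_derive t 1 phi v -> is_derive t 1 (fun s => phi s ord0 j) (v ord0 j).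
Proof.
move=> [dphi Dphi].
have dj : derivable (fun s => phi s ord0 j) t 1 by move/derivable_mxP: dphi; apply.
apply: DeriveDef => //.
by rewrite -Dphi derive_mx // mxE.
Qed.

Lemma is_derive_mk2 (fa fb : R -> R) (t : R) (da db : R) :
  is_derive t 1 fa da -> is_derive t 1 fb db ->
  is_derive t 1 (fun s => mk2 (fa s) (fb s)) (mk2 da db).
Proof.
move=> [dfa Dfa] [dfb Dfb].
have d : derivable (fun s => mk2 (fa s) (fb s)) t 1.
  apply/derivable_mxP => i j.
  have -> : (fun x => mk2 (fa x) (fb x) i j) = if j == i0 then fa else fb.
    by apply/funext => x; rewrite mxE; case: (j == i0).
  by case: (j == i0).
apply: DeriveDef => //.
rewrite derive_mx //; apply/matrixP => i j; rewrite !mxE.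
have -> : (fun x => mk2 (fa x) (fb x) i j) = if j == i0 then fa else fb.
  by apply/funext => x; rewrite mxE; case: (j == i0).
by case: (j == i0).
Qed.
End S4.

Section S5.
Variable R : realType.

Lemma derive_cont (f : R -> R) (x d : R) : is_derive x 1 f d -> {for x, continuous f}.
Proof.
move=> [df _]; exact/differentiable_continuous/derivable1_diffP.
Qed.

Lemma zero_lin (e : R -> R) :
  (forall t : R, 0 < t -> is_derive t 1 e (- e t)) -> e @ at_right 0 --> 0 ->
  forall t : R, 0 < t -> e t = 0.
Proof.
move=> de e0 t t0.
pose h := fun s : R => expR s * e s.
have dh : forall s : R, 0 < s -> is_derive s 1 h 0.
  move=> s s0; have H := is_deriveM (is_derive_expR s) (de s s0).
  have E : (expR s *: - e s + e s *: expR s) = 0.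
    by rewrite /GRing.scale /= mulrN addrC mulrC subrr.
  rewrite E in H; exact H.
have hcst : forall s : R, 0 < s -> s <= t -> h t = h s.
  move=> s s0 st.
  have [] := @MVT_segment R h (fun=> 0) s t st.
  - move=> x; rewrite in_itv /= => /andP[sx _]; apply: dh; lra.
  - apply: continuous_in_subspaceT => x; rewrite inE /= in_itv /= => /andP[sx _].
    by apply: derive_cont (dh x _); lra.
  by move=> c _; rewrite mul0r => /eqP; rewrite subr_eq0 => /eqP.
have hlim : h @ at_right 0 --> 0.
  suff : h @ at_right 0 --> expR 0 * 0 by rewrite mulr0.
  apply: cvgM => //; apply: cvg_within_filter; exact: continuous_expR.
have ht0 : h t = 0.
  apply/eqP/negPn/negP => hne.
  have eps0 : 0 < `|h t| / 2 by rewrite divr_gt0 // normr_gt0.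
  move/cvgrPdist_le: hlim => /(_ _ eps0) hn.
  have : \forall s \near at_right 0, (0 < s /\ s <= t) /\ `|0 - h s| <= `|h t| / 2.
    apply: filterI hn; near=> s; split => //; near: s.
    exact: nbhs_right_le.
  move=> /filter_ex [s [[s0 st]]]; rewrite -hcst // sub0r normrN.
  have : 0 < `|h t| by rewrite normr_gt0.
  lra.
have := ht0; rewrite /h /= => /eqP; rewrite mulf_eq0 expR_eq0 /= => /eqP //.
Unshelve. all: by end_near.
Qed.
End S5.

Section S6.
Variable R : realType.
Variable c : R -> R.
Hypothesis c_cont : continuous c.

Notation mu := (@lebesgue_measure R).

Definition w (a t : R) : R := expR t * c (a * expR (- t)).

Definition Wi (a t : R) : R :=
  (\int[mu]_(x in [set` `[-1, t]]) w a x)%R - (\int[mu]_(x in [set` `[-1, 0]]) w a x)%R.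

Lemma w_cont a : continuous (w a).
Proof.
move=> t; apply: cvgM; first exact: continuous_expR.
apply: continuous_comp; last exact: c_cont.
apply: cvgM; first exact: cvg_cst.
apply: continuous_comp; first exact: (cvgN cvg_id).
exact: continuous_expR.
Qed.

Lemma W_derive a (t : R) : -1 < t -> is_derive t 1 (Wi a) (w a t).
Proof.
move=> t1.
have ti : t < t + 1 by lra.
have intg : mu.-integrable `[-1, t + 1] (EFin \o w a).
  apply: continuous_compact_integrable; first exact: segment_compact.
  exact/continuous_subspaceT/w_cont.
have [dF F'] := continuous_FTC1_closed ti intg t1 (@w_cont a t).
set F := (fun x => _) in dF F'.
have -> : Wi a = (F - cst (F 0))%R by [].
apply: is_derive_eq.
  apply: is_deriveB; first by apply: DeriveDef; [exact: dF | rewrite -derive1E; exact: F'].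
by rewrite subr0.
Qed.

Lemma W0 a : Wi a 0 = 0.
Proof. by rewrite /Wi subrr. Qed.
End S6.
Section S7.
Variable R : realType.

Lemma mono_from_derive (G dG : R -> R) (T t : R) : T <= t ->
  (forall x, T <= x <= t -> is_derive x 1 G (dG x)) ->
  (forall x, T <= x <= t -> 0 <= dG x) -> G T <= G t.
Proof.
move=> Tt dG1 dG0.
have [] := @MVT_segment R G dG T t Tt.
- move=> x; rewrite in_itv /= => /andP[? ?]; apply: dG1; apply/andP; split; exact: ltW.
- apply: continuous_in_subspaceT => x; rewrite inE /= in_itv /= => hx.
  exact: derive_cont (dG1 x hx).
move=> x; rewrite in_itv /= => hx /eqP; rewrite subr_eq => /eqP ->.
by rewrite lerDr mulr_ge0 // ?dG0 // subr_ge0.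
Qed.
End S7.

Section S8.
Variable R : realType.
Variable c : R -> R.
Hypothesis c_cont : continuous c.
Hypothesis c_ge0 : forall s, 0 <= c s.

Lemma W_lower a (T t : R) : 0 <= T -> T <= t -> Wi c a T <= Wi c a t.
Proof.
move=> T0 Tt; apply: (@mono_from_derive _ _ (w c a)) => // x /andP[Tx _].
  by apply: W_derive => //; lra.
by rewrite /w mulr_ge0 // expR_ge0.
Qed.

Lemma W_upper a (T t K : R) : 0 <= T -> T <= t ->
  (forall s, T <= s -> c (a * expR (- s)) <= K) ->
  Wi c a t - Wi c a T <= K * (expR t - expR T).
Proof.
move=> T0 Tt cK.
suff : K * expR T - Wi c a T <= K * expR t - Wi c a t by lra.
apply: (@mono_from_derive R (fun s => K * expR s - Wi c a s) (fun s => K * expR s - w c a s)) => //.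
  move=> x /andP[Tx _].
  have H := is_deriveB (is_deriveM (is_derive_cst K x 1) (is_derive_expR x)) (W_derive c_cont a (_ : -1 < x)).
  have E : (cst K x *: expR x + expR x *: (0:R)) = K * expR x.
    by rewrite /GRing.scale /= mulr0 addr0.
  rewrite E in H; apply: H; lra.
move=> x /andP[Tx _]; rewrite /w subr_ge0 [K * _]mulrC ler_pM2l ?expR_gt0 //.
exact: cK.
Qed.
End S8.

Section S9.
Variable R : realType.
Variable c : R -> R.
Hypothesis c_cont : continuous c.
Hypothesis c_ge0 : forall s, 0 <= c s.

Definition zf (a t : R) : R := a * expR (- t).
Definition yf (a b t : R) : R := expR (- t) * (b + Wi c a t).
Definition sol (b a : R) (t : R) : 'rV[R]_2 := mk2 (yf a b t) (zf a t).
Definition Fc (x : 'rV[R]_2) : 'rV[R]_2 :=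
  mk2 (- x ord0 i0 + c (x ord0 i1)) (- x ord0 i1).

Lemma expN_derive (t : R) : is_derive t 1 (fun s => expR (- s)) (- expR (- t)).
Proof.
have H := is_derive1_comp (is_derive_expR (- t)) (is_deriveNid t 1).
rewrite mulrN1 in H; exact H.
Qed.

Lemma zf_derive a (t : R) : is_derive t 1 (zf a) (- zf a t).
Proof.
have H := is_deriveM (is_derive_cst a t 1) (expN_derive t).
have E : cst a t *: - expR (- t) + expR (- t) *: (0:R) = - zf a t.
  by rewrite /GRing.scale /= mulr0 addr0 /zf mulrN.
rewrite E in H; exact H.
Qed.

Lemma yf_derive a b (t : R) : -1 < t -> is_derive t 1 (yf a b) (- yf a b t + c (zf a t)).
Proof.
move=> t1.
have H := is_deriveM (expN_derive t) (is_deriveD (is_derive_cst b t 1) (W_derive c_cont a t1)).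
have Ey : expR (- t) *: (0 + w c a t) + (cst b t + Wi c a t) *: - expR (- t)
   = - yf a b t + c (zf a t).
  rewrite /GRing.scale /= /w /yf /zf expRN.
  have : expR t != 0 by rewrite gt_eqF ?expR_gt0.
  by move=> ?; field.
rewrite Ey in H; exact H.
Qed.

Lemma sol_derive b a (t : R) : -1 < t -> is_derive t 1 (sol b a) (Fc (sol b a t)).
Proof.
move=> t1; rewrite /Fc /sol !mk2_0 !mk2_1.
exact: is_derive_mk2 (yf_derive a b t1) (zf_derive a t).
Qed.

Lemma sol0 b a : sol b a 0 = mk2 b a.
Proof. by rewrite /sol /yf /zf W0 oppr0 expR0 mul1r mulr1 addr0. Qed.

End S9.
Section S10.
Variable R : realType.
Variable c : R -> R.
Hypothesis c_cont : continuous c.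

Lemma right_lim (f : R -> R) (d : R) : is_derive (0:R) 1 f d -> f @ at_right 0 --> f 0.
Proof. by move=> /derive_cont h; apply: cvg_within_filter. Qed.

Lemma sol_unique (D : set 'rV[R]_2) b a phi :
  is_solution D (Fc c) (mk2 b a) phi -> forall t : R, 0 <= t -> phi t = sol c b a t.
Proof.
move=> [phi0 _ phir phid] t; rewrite le_eqVlt => /predU1P[<-|t0].
  by rewrite phi0 sol0.
pose p0 s := phi s ord0 i0; pose p1 s := phi s ord0 i1.
have dp0 : forall s : R, 0 < s -> is_derive s 1 p0 (- p0 s + c (p1 s)).
  move=> s s0; have := proj_derive i0 (phid s s0).
  by rewrite /Fc mk2_0.
have dp1 : forall s : R, 0 < s -> is_derive s 1 p1 (- p1 s).
  move=> s s0; have := proj_derive i1 (phid s s0).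
  by rewrite /Fc mk2_1.
have lp0 : p0 @ at_right 0 --> b by rewrite -(mk2_0 b a); exact: proj_cvg.
have lp1 : p1 @ at_right 0 --> a by rewrite -(mk2_1 b a); exact: proj_cvg.
have e1 : forall s : R, 0 < s -> p1 s - zf a s = 0.
  apply: zero_lin.
    move=> s s0; have H := is_deriveB (dp1 s s0) (zf_derive a s).
    have E1 : - p1 s - - zf a s = - (p1 s - zf a s) by lra.
    rewrite E1 in H; exact H.
  have L : (fun s => p1 s - zf a s) @ at_right 0 --> a - zf a 0.
    by apply: cvgB => //; exact: right_lim (zf_derive a 0).
  have Z : zf a 0 = a by rewrite /zf oppr0 expR0 mulr1.
  by rewrite Z subrr in L.
have e0 : forall s : R, 0 < s -> p0 s - yf c a b s = 0.
  apply: zero_lin.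
    move=> s s0; have H := is_deriveB (dp0 s s0) (yf_derive c_cont a b (_ : -1 < s)).
    have E1 : - p0 s + c (p1 s) - (- yf c a b s + c (zf a s)) = - (p0 s - yf c a b s).
      have -> : p1 s = zf a s by apply/eqP; rewrite -subr_eq0; apply/eqP; exact: e1.
      lra.
    rewrite E1 in H; apply: H; lra.
  have L : (fun s => p0 s - yf c a b s) @ at_right 0 --> b - yf c a b 0.
    have m1 : (-1 : R) < 0 by lra.
    apply: cvgB => //; exact: right_lim (yf_derive c_cont a b m1).
  have Z : yf c a b 0 = b by rewrite /yf W0 oppr0 expR0 mul1r addr0.
  by rewrite Z subrr in L.
rewrite [phi t]mk2_eta /sol; congr mk2; apply/eqP; rewrite -subr_eq0; apply/eqP.
- exact: e0.
- exact: e1.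
Qed.
End S10.

Section S11.
Variable R : realType.
Variable c : R -> R.
Hypothesis c_cont : continuous c.
Hypothesis c_ge0 : forall s, 0 <= c s.
Hypothesis c0 : c 0 = 0.

Lemma c_small (eps : R) : 0 < eps -> exists2 d : R, 0 < d & forall s, `|s| < d -> c s <= eps.
Proof.
move=> e0; have := @c_cont 0; move/cvgrPdist_le => /(_ _ e0).
move=> /nbhs_norm0P [d d0 hd]; exists d => // s hs.
have := hd s hs; rewrite /= c0 sub0r normrN => h.
exact: le_trans (ler_norm _) h.
Qed.

Lemma y_bound a b (T t K : R) : 0 <= T -> T <= t -> 0 <= K ->
  (forall s, T <= s -> c (a * expR (- s)) <= K) ->
  `|yf c a b t| <= expR (- t) * (`|b| + Wi c a T) + K.
Proof.
move=> T0 Tt K0 cK.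
have WT0 : 0 <= Wi c a T by rewrite -(W0 c a); apply: (W_lower c_cont c_ge0).
have WtT : Wi c a T <= Wi c a t by apply: (W_lower c_cont c_ge0).
have Wup := W_upper c_cont T0 Tt cK.
have et := expR_gt0 (- t).
have eT : expR T <= expR t by rewrite ler_expR.
have eTt : expR (- t) * expR t = 1 by rewrite mulrC expRxMexpNx_1.
rewrite /yf normrM gtr0_norm //.
have : `|b + Wi c a t| <= `|b| + Wi c a t.
  by apply: le_trans (ler_normD _ _) _; rewrite (ger0_norm (le_trans WT0 WtT)).
move=> hb.
have hT : 0 <= expR (- t) * expR T by rewrite mulr_ge0 // expR_ge0.
nra.
Qed.

Lemma sol_stable (eps : R) : 0 < eps -> exists2 delta : R, 0 < delta &
  forall b a (t : R), `|b| < delta -> `|a| < delta -> 0 <= t -> enorm (sol c b a t) < eps.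
Proof.
move=> e0.
have e4 : 0 < eps / 4 by rewrite divr_gt0.
have [d d0 hd] := c_small e4.
exists (Num.min d (eps / 4)); first by rewrite lt_min d0.
move=> b a t; rewrite !lt_min => /andP[bd be] /andP[ad ae] t0.
have cK : forall s : R, 0 <= s -> c (a * expR (- s)) <= eps / 4.
  move=> s s0; apply: hd; rewrite normrM (gtr0_norm (expR_gt0 _)).
  apply: le_lt_trans ad; rewrite ler_piMr // ?expR_le1 ?oppr_le0 //.
have hy := y_bound b (lexx 0) t0 (ltW e4) cK.
rewrite W0 addr0 in hy.
have et : expR (- t) <= 1 by rewrite expR_le1 oppr_le0.
have et0 := expR_gt0 (- t).
have hz : `|zf a t| <= `|a|.
  by rewrite /zf normrM (gtr0_norm et0) ler_piMr.
apply: le_lt_trans (enorm_le_sum _) _.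
rewrite /sol mk2_0 mk2_1.
have : expR (- t) * `|b| <= `|b| by rewrite ler_piMl.
have := normr_ge0 b.
lra.
Qed.
End S11.
Section S12.
Variable R : realType.
Variable c : R -> R.
Hypothesis c_cont : continuous c.
Hypothesis c_ge0 : forall s, 0 <= c s.
Hypothesis c0 : c 0 = 0.

Lemma mk2_00 : mk2 0 0 = 0 :> 'rV[R]_2.
Proof. by apply/matrixP => i j; rewrite !mxE; case: (j == i0). Qed.

Lemma expN_small (d : R) : 0 < d -> \forall x \near +oo, expR (- x) < d.
Proof.
move=> d0; have := @cvgr_expR R; move/cvgrPdist_lt => /(_ _ d0).
apply: filterS => x; rewrite sub0r normrN ger0_norm // expR_ge0.
Qed.

Lemma sol_attract b a : sol c b a t @[t --> +oo] --> (0 : 'rV[R]_2).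
Proof.
rewrite -mk2_00; apply: mk2_cvg; last first.
  have -> : (0 : R) = a * 0 by rewrite mulr0.
  apply: cvgM; first exact: cvg_cst.
  exact: cvgr_expR.
apply/cvgrPdist_le => e e0.
have e2 : 0 < e / 2 by rewrite divr_gt0.
have [d d0 hd] := c_small c_cont c0 e2.
have da : 0 < d / (`|a| + 1) by rewrite divr_gt0 // ltr_wpDl.
have : \forall x \near +oo, 0 <= x /\ expR (- x) < d / (`|a| + 1).
  apply: filterI; last exact: expN_small.
  exact: nbhs_pinfty_ge.
move=> /filter_ex [T [T0 hT]].
have cK : forall s : R, T <= s -> c (a * expR (- s)) <= e / 2.
  move=> s Ts; apply: hd; rewrite normrM (gtr0_norm (expR_gt0 _)).
  have : expR (- s) <= expR (- T) by rewrite ler_expR lerN2.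
  move: hT; rewrite ltr_pdivlMr ?ltr_wpDl // => hT hs.
  have := normr_ge0 a; have := expR_gt0 (- s); nra.
set M := `|b| + Wi c a T.
have M0 : 0 <= M.
  rewrite addr_ge0 // -(W0 c a); exact: (W_lower c_cont c_ge0).
have eM : 0 < e / 2 / (M + 1) by rewrite divr_gt0 // ltr_wpDl.
have : \forall t \near +oo, T <= t /\ expR (- t) < e / 2 / (M + 1).
  apply: filterI; last exact: expN_small.
  by apply: nbhs_pinfty_ge; exact: num_real.
apply: filterS => t [Tt ht].
rewrite sub0r normrN.
have hy := y_bound c_cont c_ge0 b T0 Tt (ltW e2) cK.
move: ht; rewrite ltr_pdivlMr ?ltr_wpDl // => ht.
have := expR_gt0 (- t). rewrite -/M in hy. nra.
Qed.
End S12.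

Section S13.
Variable R : realType.

Lemma comp_within (H k : R -> R) (A : set R) : {within A, continuous H} ->
  continuous k -> (forall s, A (k s)) -> continuous (H \o k).
Proof.
move=> /subspace_continuousP hH kc kA s.
have kk : k @ s --> within A (nbhs (k s)).
  move=> W /= hW.
  have h : nbhs s [set y | A (k y) -> W (k y)] := @kc s _ hW.
  rewrite /fmap /=; apply: filterS h => y hy; exact: hy (kA y).
exact: cvg_comp kk (hH _ (kA s)).
Qed.

Lemma proj_contx (j : 'I_2) (x : 'rV[R]_2) : {for x, continuous (fun y : 'rV[R]_2 => y ord0 j)}.
Proof. exact: (@proj_cvg R 'rV[R]_2 (nbhs x) _ id x j cvg_id). Qed.
Lemma nproj_contx (j : 'I_2) (x : 'rV[R]_2) : {for x, continuous (fun y : 'rV[R]_2 => - y ord0 j)}.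
Proof. have := cvgN (@proj_contx j x). exact. Qed.

Lemma Fc_cont (c : R -> R) : continuous c -> continuous (Fc c).
Proof.
move=> cc x.
have h0 := cvgD (@nproj_contx i0 x) (continuous_comp (@proj_contx i1 x) (@cc (x ord0 i1))).
have {h0}h0 := h0 (nbhs_filter x).
have h1 := @nproj_contx i1 x.
have := mk2_cvg h0 h1. exact.
Qed.

Definition ginv (c : R -> R) (y : 'rV[R]_2) : 'rV[R]_2 :=
  mk2 (c (- y ord0 i1) - y ord0 i0) (- y ord0 i1).

Lemma ginv_cont (c : R -> R) : continuous c -> continuous (ginv c).
Proof.
move=> cc x.
have h0 := cvgB (continuous_comp (@nproj_contx i1 x) (@cc (- x ord0 i1))) (@proj_contx i0 x).
have {h0}h0 := h0 (nbhs_filter x).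
have h1 := @nproj_contx i1 x.
have := mk2_cvg h0 h1. exact.
Qed.

Lemma ginvK c x : ginv c (Fc c x) = x.
Proof.
rewrite /ginv /Fc !mk2_0 !mk2_1 opprK.
transitivity (mk2 (x ord0 i0) (x ord0 i1)); last by rewrite -mk2_eta.
congr mk2; lra.
Qed.

Lemma FcK c y : Fc c (ginv c y) = y.
Proof.
rewrite /ginv /Fc !mk2_0 !mk2_1 opprK.
transitivity (mk2 (y ord0 i0) (y ord0 i1)); last by rewrite -mk2_eta.
congr mk2; lra.
Qed.

Lemma ginv_local c : continuous c -> local_inverse (Fc c) (ginv c).
Proof.
move=> cc; exists setT, setT; do 4 (split; first by [exact: openT|]).
split; first by move=> x _; rewrite ginvK.
split; first by move=> y _; rewrite FcK.
split; apply: continuous_subspaceT; [exact: Fc_cont | exact: ginv_cont].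
Qed.
End S13.


Unset Implicit Arguments.

Lemma stab_Fc (R : realType) (c : R -> R) : continuous c -> (forall s, 0 <= c s) -> c 0 = 0 ->
  stabilizing (fun (_ : 'rV[R]_2) (v : 'rV[R]_2) => v) (Fc c).
Proof.
move=> cc cg c0.
exists 1; split; first lra.
rewrite /=; split.
- rewrite /Fc !mxE c0 oppr0 add0r; exact: mk2_00.
- move=> x _; exact: Fc_cont.
- have [dl dl0 hdl] := sol_stable cc cg c0 (ltr01 : (0:R) < 1).
  exists dl; split => // x0 hx0.
  have hb : `|x0 ord0 i0| < dl by apply: le_lt_trans (enorm_ge_0 _) hx0.
  have ha : `|x0 ord0 i1| < dl by apply: le_lt_trans (enorm_ge_1 _) hx0.
  split.
  + exists (sol c (x0 ord0 i0) (x0 ord0 i1)); split.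
    * by rewrite sol0 -mk2_eta.
    * by move=> t t0; rewrite /eball0 /=; apply: hdl.
    * have m1 : (-1 : R) < 0 by lra.
      have := mk2_cvg (right_lim (yf_derive cc (x0 ord0 i1) (x0 ord0 i0) m1))
                     (right_lim (zf_derive (x0 ord0 i1) 0)).
      have -> : yf c (x0 ord0 i1) (x0 ord0 i0) 0 = x0 ord0 i0.
        by rewrite /yf W0 oppr0 expR0 mul1r addr0.
      have -> : zf (x0 ord0 i1) 0 = x0 ord0 i1 by rewrite /zf oppr0 expR0 mulr1.
      by move=> h; rewrite [X in _ --> X](mk2_eta x0); exact: h.
    * move=> t t0; apply: sol_derive => //; lra.
  + move=> phi1 phi2 h1 h2 t t0.
    rewrite [x0]mk2_eta in h1 h2.
    by rewrite (sol_unique cc h1 t0) (sol_unique cc h2 t0).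
- move=> e e0; have [dl dl0 hdl] := sol_stable cc cg c0 e0.
  exists dl; split => // x0 phi hx0 hphi t t0.
  rewrite [x0]mk2_eta in hphi; rewrite (sol_unique cc hphi t0).
  apply: hdl => //.
  + by apply: le_lt_trans (enorm_ge_0 _) hx0.
  + by apply: le_lt_trans (enorm_ge_1 _) hx0.
- exists 1; split; first lra.
  move=> x0 phi _ hphi; rewrite [x0]mk2_eta in hphi.
  have hs := sol_attract cc cg c0 (x0 ord0 i0) (x0 ord0 i1).
  apply/cvgrPdist_le => e e0.
  move/cvgrPdist_le: hs => /(_ _ e0).
  have : \forall t \near +oo, (0 : R) <= t by apply: nbhs_pinfty_ge; exact: num_real.
  apply: filterS2 => t t0 h.
  by rewrite (sol_unique cc hphi t0).
Qed.

Lemma bnd_Fc (R : realType) (c : R -> R) : continuous c -> (forall s, 0 <= c s) -> c 0 = 0 ->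
  bounded_near_origin (fun _ : 'rV[R]_2 => 0) (fun _ => 1) (Fc c).
Proof.
move=> cc cg c0.
have q0 : (0 : R) < 1 / 4 by lra.
have [d d0 hd] := c_small cc c0 q0.
exists (Num.min d (1/4)); split; first by rewrite lt_min d0.
move=> x; rewrite lt_min => /andP[xd xq].
apply/andP; split; first exact: enorm_ge0.
apply: le_trans (enorm_le_sum _) _.
rewrite /Fc mk2_0 mk2_1 normrN.
have h0 := enorm_ge_0 x; have h1 := enorm_ge_1 x.
have hc : c (x ord0 i1) <= 1 / 4 by apply: hd; lra.
have := cg (x ord0 i1).
have := ler_normD (- x ord0 i0) (c (x ord0 i1)); rewrite normrN (ger0_norm (cg _)).
lra.
Qed.

Theorem theorem7 (R : realType) :
  exists (n m : nat) (f : 'rV[R]_n -> 'rV[R]_m -> 'rV[R]_n) (d1 d2 : 'rV[R]_n -> R),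
    [/\ continuous_near_origin f, f 0 0 = 0,
        nonneg_near_origin d1, nonneg_near_origin d2 &
        forall (eps : R) (H : R -> R),
          0 < eps ->
          {within `[0, eps[, continuous H} ->
          H 0 = 0 ->
          (forall r, 0 <= r < eps -> 0 <= H r) ->
          ~ (forall u : 'rV[R]_n -> 'rV[R]_m,
               stabilizing f u -> bounded_near_origin d1 d2 u ->
               forall g, local_inverse (Fu f u) g ->
               exists delta : R, 0 < delta /\
                 forall r, 0 < r < delta -> (hsup g r <= (H r)%:E)%E)].
Proof.
exists 2%N, 2%N, (fun (_ : 'rV[R]_2) (v : 'rV[R]_2) => v), (fun _ => 0), (fun _ => 1).
split.
- exists 1; split; first lra.
  by move=> x v _ _; exact: cvg_snd.
- by [].
- by exists 1; split => //; lra.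
- by exists 1; split => // x _; lra.
move=> eps H eps0 Hc H0 Hge0 Hall.
pose k := fun s : R => Num.min (2 * `|s|) (eps / 2).
pose c := fun s : R => H (k s) + `|s|.
have kA : forall s, `[0, eps[%classic (k s).
  move=> s; rewrite /= in_itv /= /k; apply/andP; split.
    by rewrite le_min mulr_ge0 // ?normr_ge0 //; lra.
  by rewrite gt_min; apply/orP; right; lra.
have kc : continuous k.
  move=> s.
  have h1 : {for s, continuous (fun s : R => 2 * `|s|)}.
    apply: cvgM; first exact: cvg_cst.
    exact: (@norm_continuous _ R^o).
  have h2 : {for s, continuous (fun _ : R => eps / 2)} by exact: cvg_cst.
  have := continuous_min h1 h2. exact.
have cc : continuous c.
  move=> s; apply: cvgD; last exact: (@norm_continuous _ R^o).
  exact: (comp_within Hc kc kA).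
have cg : forall s, 0 <= c s.
  move=> s; rewrite /c addr_ge0 //; apply: Hge0.
  by have := kA s; rewrite /= in_itv.
have c0 : c 0 = 0 by rewrite /c /k normr0 mulr0 (@min_l _ _ 0) ?H0 ?addr0 //; lra.
have [delta [dpos hd]] := Hall (Fc c) (@stab_Fc R c cc cg c0) (@bnd_Fc R c cc cg c0) (ginv c) (ginv_local cc).
pose r := Num.min delta (eps / 2) / 2.
have r0 : 0 < r by rewrite /r divr_gt0 // lt_min dpos /=; lra.
have rd : r < delta.
  have : Num.min delta (eps / 2) <= delta by rewrite ge_min lexx.
  rewrite /r; lra.
have re : r < eps / 2.
  have : Num.min delta (eps / 2) <= eps / 2 by rewrite ge_min lexx orbT.
  rewrite /r; lra.
have := hd r; rewrite r0 rd => /(_ isT).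
pose y := mk2 0 (- (r / 2)).
have yB : eball0 r y by rewrite /eball0 /= /y enorm_mk2_0 normrN ger0_norm; lra.
have := @ereal_sup_ubound _ [set (enorm (ginv c y0))%:E | y0 in @eball0 R 2 r] (enorm (ginv c y))%:E.
move=> /(_ (ex_intro2 _ _ y yB erefl)) hub hle.
have := le_trans hub hle; rewrite lee_fin.
have : `|ginv c y ord0 i0| <= enorm (ginv c y) by exact: enorm_ge_0.
rewrite /ginv mk2_0 /y mk2_0 mk2_1 opprK subr0 ger0_norm //.
rewrite /c /k ger0_norm; last lra.
have -> : 2 * (r / 2) = r by field.
rewrite (@min_l _ _ r); last lra.
lra.
Qed.
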